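(* Let $K$ be an algebraically closed field of characteristic zero, $m,n\ge1$, and let $G$ be a differential ideal of $K[[t_1,\ldots,t_m]]\{x_1,\ldots,x_n\}$. If $\varphi\in K[[t_1,\ldots,t_m]]^n$ is a solution of $G$ (i.e. $P(\varphi)=0$ for all $P\in G$), then $\operatorname{Supp}(\varphi)$ is a solution of $\operatorname{trop}(G)$.
   Context: Notation: $t^J=t_1^{j_1}\cdots t_m^{j_m}$, $\|J\|_\infty=\max_i j_i$, $\Theta(J)=\partial_{t_1}^{j_1}\cdots\partial_{t_m}^{j_m}$. $K[[t_1,\ldots,t_m]]\{x_1,\ldots,x_n\}$ is the polynomial ring over $K[[t_1,\ldots,t_m]]$ in the indeterminates $x_{i,J}$ ($1\le i\le n$, $J\in\mathbb{Z}_{\ge0}^m$), with derivations $\partial_{t_k}$ extended by $\partial_{t_k}x_{i,J}=x_{i,J+e_k}$; a differential ideal is an ideal stable under these derivations. For $\varphi\in K[[t]]^n$, $P(\varphi)$ is obtained by substituting $\Theta(J)\varphi_i$ for $x_{i,J}$. Every $P$ can be written $P=\sum_{M\in\Delta}\alpha_ME_M$ with $\Delta$ finite, $\alpha_M\in K[[t]]$, and differential monomials $E_M=\prod_{i,\|J\|_\infty\le r}x_{i,J}^{M_{i,J}}$. $\operatorname{Supp}(\sum a_Jt^J)=\{J:a_J\ne0\}$, applied componentwise to tuples. For $X\subseteq\mathbb{Z}_{\ge0}^m$, $\mathcal{N}(X)$ is the convex hull in $\mathbb{R}^m$ of $X+\mathbb{Z}_{\ge0}^m$, $x\in X$ is a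 vertex if $x\notin\mathcal{N}(X\setminus\{x\})$, $\operatorname{Vert}(X)$ is the set of vertices; $\operatorname{trop}(\psi)=\operatorname{Vert}(\operatorname{Supp}\psi)$ for $\psi\in K[[t]]$. Vertex sets form a semiring with $S\oplus T=\operatorname{Vert}(S\cup T)$, $S\odot T=\operatorname{Vert}(S+T)$ (Minkowski sum). $\Theta_{\operatorname{trop}}(J)T=\{(s_1-j_1,\ldots,s_m-j_m):(s_i)\in T, s_i\ge j_i\ \forall i\}$. For $S=(S_1,\dots,S_n)$ subsets of $\mathbb{Z}_{\ge0}^m$, the tropical monomial $\epsilon_M$ evaluates as $\epsilon_M(S)=\operatorname{Vert}\bigl(\sum_{i,J}M_{i,J}\Theta_{\operatorname{trop}}(J)S_i\bigr)$ (Minkowski sums, $kX$ the $k$-fold sum, $0X=\{0\}$). The tropicalization of $P=\sum_{M\in\Delta}\alpha_ME_M$ is the tropical differential polynomial $p=\operatorname{trop}(P)=\bigoplus_{M\in\Delta}a_M\odot\epsilon_M$ with $a_M=\operatorname{trop}(\alpha_M)$ (terms with $\alpha_M=0$ omitted), evaluated as $p(S)=\operatorname{Vert}\bigl(\bigcup_{M\in\Delta}(a_M+\epsilon_M(S))\bigr)$. $S$ is a solution of $p$ if for every $J\in p(S)$ there are $M_1\neq M_2$ in $\Delta$ with $J\in a_{M_1}\odot\epsilon_{M_1}(S)$ and $J\in a_{M_2}\odot\epsilon_{M_2}(S)$ (so if $p(S)=\emptyset$, $S$ is a solution). $\operatorname{trop}(G)=\{\operatorname{trop}(P):P\in G\}$,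 and $S$ is a solution of $\operatorname{trop}(G)$ if it is a solution of every element. *)

(* Defs.v *)
From Stdlib Require Import Reals List.
From HB Require Import structures.
From mathcomp Require Import all_boot all_order all_algebra.
Set Implicit Arguments. Unset Strict Implicit. Unset Printing Implicit Defensive.
Import GRing.Theory.
Local Open Scope ring_scope.

Definition mi (m : nat) := {ffun 'I_m -> nat}.
Definition mi0 {m : nat} : mi m := [ffun _ => 0%N].
Definition miadd {m : nat} (I J : mi m) : mi m := [ffun i => (I i + J i)%N].
Definition miunit {m : nat} (k : 'I_m) : mi m := [ffun j => nat_of_bool (j == k)].

Definition ps (K : fieldType) (m : nat) := mi m -> K.

Section PS.
Variables (K : fieldType) (m : nat).
Definition ps0 : ps K m := fun _ => 0.
Definition ps1 : ps K m := fun J => (J == mi0)%:R.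
Definition psadd (f g : ps K m) : ps K m := fun J => f J + g J.
(* Cauchy product: coefficient of t^J is sum_{I <= J} f_I g_{J-I} *)
Definition psmul (f g : ps K m) : ps K m := fun J =>
  \sum_(I : {ffun 'I_m -> 'I_(\sum_(i < m) J i)%N.+1} | [forall i, (I i <= J i)%N])
     f [ffun i => nat_of_ord (I i)] * g [ffun i => (J i - I i)%N].
Definition psder (k : 'I_m) (f : ps K m) : ps K m :=
  fun J => (J k).+1%:R * f (miadd J (miunit k)).
Definition psTheta (J : mi m) (f : ps K m) : ps K m :=
  foldr (fun k g => iter (J k) (psder k) g) f (enum 'I_m).
End PS.

(* a variable x_{i,J} *)
Definition dvar (m n : nat) := ('I_n * mi m)%type.
(* a differential monomial E_M, as the multiset (list up to permutation)
   of its variables, counted with multiplicity *)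
Definition dmonom (m n : nat) := seq (dvar m n).
(* a differential polynomial, as a formal finite sum of terms alpha * E_M *)
Definition dpoly (K : fieldType) (m n : nat) := seq (ps K m * dmonom m n).

Section DPoly.
Variables (K : fieldType) (m n : nat).
Local Notation dpoly := (dpoly K m n).
Local Notation dmonom := (dmonom m n).

Definition dcoef (P : dpoly) (M : dmonom) : ps K m :=
  fun J => \sum_(c <- P | perm_eq c.2 M) c.1 J.
(* equality in the ring K[[t]]{x} *)
Definition dpequiv (P Q : dpoly) : Prop :=
  forall M J, dcoef P M J = dcoef Q M J.
Definition dpadd (P Q : dpoly) : dpoly := P ++ Q.
Definition dpmul (P Q : dpoly) : dpoly :=
  [seq (psmul c.1 d.1, c.2 ++ d.2) | c <- P, d <- Q].
(* d_{t_k} x_{i,J} = x_{i,J+e_k} *)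
Definition dvshift (k : 'I_m) (v : dvar m n) : dvar m n := (v.1, miadd v.2 (miunit k)).
(* Leibniz rule on a monomial: list of monomials of d_{t_k} E_M *)
Fixpoint dmder (k : 'I_m) (M : dmonom) : seq dmonom :=
  match M with
  | [::] => [::]
  | v :: M' => (dvshift k v :: M') :: [seq v :: N | N <- dmder k M']
  end.
Definition dpder (k : 'I_m) (P : dpoly) : dpoly :=
  flatten [seq (psder k c.1, c.2) :: [seq (c.1, N) | N <- dmder k c.2] | c <- P].

(* differential ideal (as a set of ring elements, closed under ring equality) *)
Definition is_diff_ideal (G : dpoly -> Prop) : Prop :=
  [/\ G [::],
      (forall P Q, G P -> G Q -> G (dpadd P Q)),
      (forall P Q, G P -> G (dpmul Q P)),
      (forall k P, G P -> G (dpder k P)) &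
      (forall P Q, G P -> dpequiv P Q -> G Q)].

Definition dmeval (phi : 'I_n -> ps K m) (M : dmonom) : ps K m :=
  foldr (fun v acc => psmul (psTheta v.2 (phi v.1)) acc) (@ps1 K m) M.
Definition dpeval (P : dpoly) (phi : 'I_n -> ps K m) : ps K m :=
  foldr (fun c acc => psadd (psmul c.1 (dmeval phi c.2)) acc) (@ps0 K m) P.
End DPoly.

Definition iset (m : nat) := mi m -> Prop.

Section Trop.
Variable m : nat.

(* x in N(X) = conv(X + Z_{>=0}^m) in R^m, for an integer point x *)
Definition inNewton (X : iset m) (x : mi m) : Prop :=
  exists l : list (R * mi m),
    Forall (fun c : R * mi m => Rle R0 (fst c) /\
                     exists y, X y /\ forall i, (y i <= (snd c) i)%N) l /\
    fold_right (fun (c : R * mi m) acc => Rplus (fst c) acc) R0 l = R1 /\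
    forall i, INR (x i) =
      fold_right (fun (c : R * mi m) acc => Rplus (Rmult (fst c) (INR ((snd c) i))) acc) R0 l.

Definition Vert (X : iset m) : iset m :=
  fun x => X x /\ ~ inNewton (fun y => X y /\ y <> x) x.

Definition Supp (K : fieldType) (psi : ps K m) : iset m := fun J => psi J <> 0.
Definition tropc (K : fieldType) (psi : ps K m) : iset m := Vert (Supp psi).

Definition minkowski (A B : iset m) : iset m :=
  fun J => exists I1 I2, A I1 /\ B I2 /\ J = miadd I1 I2.
Definition ThetaTrop (J : mi m) (T : iset m) : iset m :=
  fun I => exists s, T s /\ (forall i, (J i <= s i)%N) /\ I = [ffun i => (s i - J i)%N].
End Trop.

Section TropPoly.
Variables (K : fieldType) (m n : nat).

Definition epsM (S : 'I_n -> iset m) (M : dmonom m n) : iset m :=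
  Vert (foldr (fun v A => minkowski (ThetaTrop v.2 (S v.1)) A) (fun J => J = mi0) M).
Definition tterm (P : dpoly K m n) (S : 'I_n -> iset m) (M : dmonom m n) : iset m :=
  minkowski (tropc (dcoef P M)) (epsM S M).
Definition nzps (psi : ps K m) : Prop := exists J, psi J <> 0.
Definition tropEval (P : dpoly K m n) (S : 'I_n -> iset m) : iset m :=
  Vert (fun J => exists M, nzps (dcoef P M) /\ tterm P S M J).
Definition tropSol (P : dpoly K m n) (S : 'I_n -> iset m) : Prop :=
  forall J, tropEval P S J ->
    exists M1 M2, ~~ perm_eq M1 M2 /\ nzps (dcoef P M1) /\ nzps (dcoef P M2) /\
      Vert (tterm P S M1) J /\ Vert (tterm P S M2) J.
End TropPoly.

(* Main.v *)
Require Import Defs.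
From Stdlib Require Import Reals Lra List Classical FunctionalExtensionality.
From HB Require Import structures.
From mathcomp Require Import all_boot all_order all_algebra.
From mathcomp Require Import zify.
Set Implicit Arguments. Unset Strict Implicit.
Import GRing.Theory.

Section Conv.
Variable m : nat.
Local Open Scope R_scope.

Definition wsum (l : list (R * mi m)) : R := fold_right (fun (c : R * mi m) acc => fst c + acc) 0 l.
Definition vsum (l : list (R * mi m)) (i : 'I_m) : R :=
  fold_right (fun (c : R * mi m) acc => fst c * INR ((snd c) i) + acc) 0 l.
Definition good (Y : iset m) (l : list (R * mi m)) :=
  Forall (fun c : R * mi m => 0 <= fst c /\ exists y, Y y /\ forall i, (y i <= snd c i)%N) l.
Definition nnl (r : list (R * mi m)) := Forall (fun c : R * mi m => 0 <= fst c) r.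
Definition Rep (Y : iset m) (w : R) (x : 'I_m -> R) :=
  exists l r, good Y l /\ nnl r /\ wsum l = w /\ forall i, x i = vsum l i + vsum r i.

Lemma wsum_app l1 l2 : wsum (l1 ++ l2) = wsum l1 + wsum l2.
Proof. induction l1 as [|c l IH]; simpl; [lra|]. unfold wsum in *; simpl in *. rewrite IH; lra. Qed.
Lemma vsum_app l1 l2 i : vsum (l1 ++ l2) i = vsum l1 i + vsum l2 i.
Proof. induction l1 as [|c l IH]; simpl; [unfold vsum; simpl; lra|]. unfold vsum in *; simpl in *. rewrite IH; lra. Qed.

Definition sc (a : R) (l : list (R * mi m)) := List.map (fun c : R * mi m => (a * fst c, snd c)) l.
Lemma wsum_sc a l : wsum (sc a l) = a * wsum l.
Proof. induction l as [|c l IH]; unfold wsum in *; simpl; [lra|]. rewrite IH; lra. Qed.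
Lemma vsum_sc a l i : vsum (sc a l) i = a * vsum l i.
Proof. induction l as [|c l IH]; unfold vsum in *; simpl; [lra|]. rewrite IH; lra. Qed.
Lemma good_sc Y a l : 0 <= a -> good Y l -> good Y (sc a l).
Proof.
  intros Ha H; induction H; simpl; constructor; auto.
  destruct H as [H1 H2]; split; simpl; auto. apply Rmult_le_pos; auto.
Qed.
Lemma nnl_sc a l : 0 <= a -> nnl l -> nnl (sc a l).
Proof. intros Ha H; induction H; simpl; constructor; auto. simpl; apply Rmult_le_pos; auto. Qed.
Lemma good_app Y l1 l2 : good Y l1 -> good Y l2 -> good Y (l1 ++ l2).
Proof. intros; apply Forall_app; auto. Qed.
Lemma nnl_app l1 l2 : nnl l1 -> nnl l2 -> nnl (l1 ++ l2).
Proof. intros; apply Forall_app; auto. Qed.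
Lemma good_mono (Y Z : iset m) l : (forall y, Y y -> Z y) -> good Y l -> good Z l.
Proof.
  intros HYZ H; eapply Forall_impl; [|exact H].
  intros [c p] [H1 [y [Hy Hle]]]; split; auto; exists y; auto.
Qed.
Lemma good_nnl Y l : good Y l -> nnl l.
Proof. intro H; eapply Forall_impl; [|exact H]; intros a [H1 _]; auto. Qed.
Lemma wsum_nn l : nnl l -> 0 <= wsum l.
Proof. intro H; induction H; unfold wsum in *; simpl; [lra|]. lra. Qed.
Lemma vsum_nn l i : nnl l -> 0 <= vsum l i.
Proof.
  intro H; induction H; unfold vsum in *; simpl; [lra|].
  assert (0 <= INR (snd x i)) by apply pos_INR.
  assert (0 <= fst x * INR (snd x i)) by (apply Rmult_le_pos; auto). lra.
Qed.

Lemma Rep_ext Y w x w' x' : Rep Y w x -> w = w' -> (forall i, x i = x' i) -> Rep Y w' x'.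
Proof.
  intros [l [r [H1 [H2 [H3 H4]]]]] <- Hx; exists l, r; repeat split; auto.
  intro i; rewrite <- Hx; auto.
Qed.
Lemma Rep_add Y w x w' x' : Rep Y w x -> Rep Y w' x' -> Rep Y (w + w') (fun i => x i + x' i).
Proof.
  intros [l [r [H1 [H2 [H3 H4]]]]] [l' [r' [H1' [H2' [H3' H4']]]]].
  exists (l ++ l'), (r ++ r'); repeat split.
  - apply good_app; auto.
  - apply nnl_app; auto.
  - rewrite wsum_app; subst; auto.
  - intro i; rewrite !vsum_app H4 H4'; lra.
Qed.
Lemma Rep_scale Y a w x : 0 <= a -> Rep Y w x -> Rep Y (a * w) (fun i => a * x i).
Proof.
  intros Ha [l [r [H1 [H2 [H3 H4]]]]].
  exists (sc a l), (sc a r); repeat split.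
  - apply good_sc; auto.
  - apply nnl_sc; auto.
  - rewrite wsum_sc; subst; auto.
  - intro i; rewrite !vsum_sc H4; lra.
Qed.
Lemma Rep_vec Y a (d : mi m) : 0 <= a -> Rep Y 0 (fun i => a * INR (d i)).
Proof.
  intros Ha; exists nil, ((a, d) :: nil); split; [constructor|split; [constructor; auto; constructor|split; [reflexivity|]]].
  intro i; unfold vsum; simpl; lra.
Qed.
Lemma Rep_zero Y : Rep Y 0 (fun _ => 0).
Proof. exists nil, nil; split; [constructor|split; [constructor|split; [reflexivity|]]]. intro i; unfold vsum; simpl; lra. Qed.
Lemma Rep_mono (Y Z : iset m) w x : (forall y, Y y -> Z y) -> Rep Y w x -> Rep Z w x.
Proof.
  intros HYZ [l [r [H1 [H2 [H3 H4]]]]]; exists l, r; repeat split; auto.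
  eapply good_mono; eauto.
Qed.
Lemma Rep_nn Y w x : Rep Y w x -> 0 <= w /\ forall i, 0 <= x i.
Proof.
  intros [l [r [H1 [H2 [H3 H4]]]]]; split.
  - subst; apply wsum_nn; eapply good_nnl; eauto.
  - intro i; rewrite H4.
    assert (0 <= vsum l i) by (apply vsum_nn; eapply good_nnl; eauto).
    assert (0 <= vsum r i) by (apply vsum_nn; auto). lra.
Qed.
Lemma Rep_pt (Y : iset m) y (p : mi m) : Y y -> (forall i, (y i <= p i)%N) -> Rep Y 1 (fun i => INR (p i)).
Proof.
  intros Hy Hle; exists ((1, p) :: nil), nil; split; [|split; [constructor|split]].
  - constructor; [|constructor]. split; simpl; [lra|]; exists y; auto.
  - unfold wsum; simpl; lra.
  - intro i; unfold vsum; simpl; lra.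
Qed.

Lemma INR_subn (a b : nat) : (b <= a)%N -> INR (a - b)%N = INR a - INR b.
Proof. intro H; apply minus_INR; apply/leP; auto. Qed.

Lemma Rep_shift Y w x (d : mi m) : Rep Y w x -> Rep Y w (fun i => x i + INR (d i)).
Proof.
  intro H; eapply Rep_ext; [apply (Rep_add H (@Rep_vec Y 1 d ltac:(lra)))| lra |].
  intro i; simpl; lra.
Qed.

Definition shiftl (N : nat) (d : mi m) (l : list (R * mi m)) :=
  List.map (fun c : R * mi m => (fst c, [ffun i => ((snd c) i + N * d i)%N] : mi m)) l.
Lemma wsum_shiftl N d l : wsum (shiftl N d l) = wsum l.
Proof. induction l as [|c l IH]; unfold wsum in *; simpl; [lra|]. rewrite IH; lra. Qed.
Lemma vsum_shiftl N d l i : vsum (shiftl N d l) i = vsum l i + wsum l * (INR N * INR (d i)).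
Proof.
  induction l as [|c l IH]; unfold vsum, wsum in *; simpl; [lra|].
  rewrite IH ffunE plus_INR mult_INR; lra.
Qed.
Lemma good_shiftl Y N d l : good Y l -> good Y (shiftl N d l).
Proof.
  intro H; induction H; simpl; constructor; auto.
  destruct H as [H1 [y [Hy Hle]]]; split; auto; exists y; split; auto.
  intro i; simpl; rewrite ffunE; apply (leq_trans (Hle i)); apply leq_addr.
Qed.

Lemma absorb Y w x : Rep Y w x -> 0 < w ->
  exists l, good Y l /\ wsum l = w /\ forall i, x i = vsum l i.
Proof.
  intros [l [r [H1 [H2 [H3 H4]]]]] Hw.
  revert l x H1 H3 H4; induction r as [|[e d] r IH]; intros l x H1 H3 H4.
  - exists l; repeat split; auto. intro i; rewrite H4; unfold vsum at 2; simpl; lra.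
  - inversion H2; subst. simpl in H5.
    destruct (INR_archimed (wsum l) (e + 1) Hw) as [N HN].
    assert (HN0 : 0 < INR N).
    { assert (0 <= e) by auto. destruct (Rle_or_lt (INR N) 0) as [h|h]; auto.
      assert (INR N * wsum l <= 0) by nra. lra. }
    set (t := e / (wsum l * INR N)).
    assert (Ht0 : 0 <= t) by (unfold t; apply Rle_mult_inv_pos; [auto|apply Rmult_lt_0_compat; auto]).
    assert (Ht1 : t <= 1).
    { unfold t; apply (Rmult_le_reg_r (wsum l * INR N)); [apply Rmult_lt_0_compat; auto|].
      unfold Rdiv; rewrite Rmult_assoc Rinv_l; [lra|].
      apply Rgt_not_eq, Rmult_lt_0_compat; auto. }
    apply (IH H6 (sc (1 - t) l ++ sc t (shiftl N d l)) (fun i => x i)).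
    + apply good_app; apply good_sc; try lra; auto. apply good_shiftl; auto.
    + rewrite wsum_app !wsum_sc wsum_shiftl; lra.
    + intro i; rewrite H4 vsum_app !vsum_sc vsum_shiftl. unfold vsum at 2; simpl.
      fold (vsum r i).
      assert (t * (wsum l * (INR N * INR (d i))) = e * INR (d i)).
      { unfold t. field. split; apply Rgt_not_eq; auto. }
      nra.
Qed.

Lemma inN_Rep Y (x : mi m) : inNewton Y x <-> Rep Y 1 (fun i => INR (x i)).
Proof.
  split.
  - intros [l [H1 [H2 H3]]]; exists l, nil; split; [exact H1|split; [constructor|split; [exact H2|]]].
    intro i; rewrite H3; unfold vsum at 2; simpl; rewrite Rplus_0_r; reflexivity.
  - intro H; destruct (absorb H) as [l [H1 [H2 H3]]]; [lra|].
    exists l; split; [exact H1|split; [exact H2|]]. intro i; rewrite (H3 i); reflexivity.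
Qed.

Lemma inN_mono (Y Z : iset m) (x : mi m) : (forall y, Y y -> Z y) -> inNewton Y x -> inNewton Z x.
Proof. intros H H'; apply inN_Rep; apply inN_Rep in H'; eapply Rep_mono; eauto. Qed.

Lemma inN_self (Y : iset m) (x : mi m) : Y x -> inNewton Y x.
Proof. intro H; apply inN_Rep; eapply Rep_pt; eauto. Qed.

Lemma inN_dom (Y : iset m) (y x : mi m) : Y y -> (forall i, (y i <= x i)%N) -> inNewton Y x.
Proof. intros H Hle; apply inN_Rep; eapply Rep_pt; eauto. Qed.

Lemma Rep_good_gen Y Z l : good Y l -> (forall y, Y y -> Rep Z 1 (fun i => INR (y i))) ->
  Rep Z (wsum l) (vsum l).
Proof.
  intros H HYZ; induction H as [|[c p] l [Hc [y [Hy Hle]]] Hl IH].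
  - eapply Rep_ext; [apply Rep_zero| reflexivity| intro i; reflexivity].
  - simpl in *.
    assert (Hp : Rep Z 1 (fun i => INR (p i))).
    { eapply Rep_ext; [apply (Rep_shift [ffun i => (p i - y i)%N] (HYZ y Hy))|reflexivity|].
      intro i; simpl; rewrite ffunE INR_subn; [lra|auto]. }
    eapply Rep_ext; [apply (Rep_add (Rep_scale Hc Hp) IH)|unfold wsum; simpl; lra|].
    intro i; unfold vsum; simpl; lra.
Qed.

Lemma inN_trans (Y Z : iset m) (x : mi m) : inNewton Y x -> (forall y, Y y -> inNewton Z y) -> inNewton Z x.
Proof.
  intros [l [H1 [H2 H3]]] HYZ; apply inN_Rep.
  eapply Rep_ext; [apply (Rep_good_gen H1)| auto| intro i; rewrite H3; reflexivity].
  intros y Hy; apply inN_Rep; auto.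
Qed.


Definition setD1 (X : iset m) (J : mi m) : iset m := fun y => X y /\ y <> J.

Lemma ffun_neq (y J : mi m) : y <> J -> exists i, y i <> J i.
Proof.
  intro H; apply NNPP; intro H'; apply H; apply/ffunP => i.
  apply NNPP; intro H2; apply H'; exists i; auto.
Qed.

Lemma splitJ_good (U : iset m) (J : mi m) l : good U l ->
  exists lam v, 0 <= lam /\ Rep (setD1 U J) (wsum l - lam) v /\
    forall i, vsum l i = lam * INR (J i) + v i.
Proof.
  intro H; induction H as [|[c p] l [Hc [y [Hy Hle]]] Hl IH].
  - exists 0, (fun _ => 0); split; [lra|split].
    + eapply Rep_ext; [apply Rep_zero|unfold wsum; simpl; lra|reflexivity].
    + intro i; unfold vsum; simpl; lra.
  - destruct IH as [lam [v [H0 [HR Hv]]]]; simpl in *.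
    destruct (classic (y = J)) as [->|Hne].
    + exists (c + lam), (fun i => c * INR ([ffun j => (p j - J j)%N] i) + v i).
      split; [lra|split].
      * eapply Rep_ext; [apply (Rep_add (@Rep_vec (setD1 U J) c [ffun j => (p j - J j)%N] Hc) HR)|
          unfold wsum; simpl; fold (wsum l); lra| reflexivity].
      * intro i; unfold vsum; simpl; fold (vsum l i). rewrite Hv ffunE INR_subn; auto; lra.
    + exists lam, (fun i => 1 * c * INR (p i) + v i); split; [lra|split].
      * assert (Hp : Rep (setD1 U J) 1 (fun i => INR (p i))) by (apply (Rep_pt (y:=y)); [split|]; auto).
        eapply Rep_ext; [apply (Rep_add (Rep_scale Hc Hp) HR)|unfold wsum; simpl; fold (wsum l); lra|].
        intro i; simpl; lra.
      * intro i; unfold vsum; simpl; fold (vsum l i). rewrite Hv; lra.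
Qed.

Lemma elemJ (U : iset m) (J p y : mi m) : inNewton U y -> y <> J -> (forall i, (y i <= p i)%N) ->
  exists lam v, 0 <= lam /\ Rep (setD1 U J) (1 - lam) v /\
    (forall i, INR (p i) = lam * INR (J i) + v i) /\ (lam < 1 \/ exists i, 0 < v i).
Proof.
  intros [l [Hg [Hw Hv]]] Hne Hle.
  destruct (splitJ_good J Hg) as [lam [v0 [H0 [HR Hv0]]]].
  change (wsum l = 1) in Hw. rewrite Hw in HR.
  exists lam, (fun i => v0 i + INR ([ffun j => (p j - y j)%N] i)).
  destruct (Rep_nn HR) as [Hw0 Hv0n].
  split; [lra|split; [apply Rep_shift; auto|split]].
  - intro i; rewrite ffunE INR_subn; auto. specialize (Hv i); change (INR (y i) = vsum l i) in Hv.
    rewrite Hv0 in Hv. lra.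
  - destruct (Rlt_or_le lam 1) as [h|h]; [left; auto|right].
    destruct (ffun_neq Hne) as [i Hi]; exists i.
    specialize (Hv i); change (INR (y i) = vsum l i) in Hv. rewrite Hv0 in Hv.
    assert (lam = 1) by lra. subst lam.
    assert (v0 i <> 0). { intro h0. apply Hi. apply INR_eq. lra. }
    specialize (Hv0n i). rewrite ffunE. assert (0 <= INR (p i - y i)%N) by apply pos_INR. lra.
Qed.

Lemma sumJ (U Y : iset m) (J : mi m) l : good (setD1 Y J) l -> (forall y, Y y -> inNewton U y) ->
  exists Lam V, 0 <= Lam /\ Rep (setD1 U J) (wsum l - Lam) V /\
    (forall i, vsum l i = Lam * INR (J i) + V i) /\
    (0 < wsum l -> Lam < wsum l \/ exists i, 0 < V i).
Proof.
  intros H HYU; induction H as [|[c p] l [Hc [y [[Hy Hyn] Hle]]] Hl IH].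
  - exists 0, (fun _ => 0); split; [lra|split; [|split]].
    + eapply Rep_ext; [apply Rep_zero|unfold wsum; simpl; lra|reflexivity].
    + intro i; unfold vsum; simpl; lra.
    + unfold wsum; simpl; lra.
  - destruct IH as [Lam [V [H0 [HR [Hv Hs]]]]]; simpl in *.
    destruct (elemJ (HYU y Hy) Hyn Hle) as [lam [v [h0 [hR [hv hs]]]]].
    exists (c * lam + Lam), (fun i => c * v i + V i).
    destruct (Rep_nn HR) as [HRw HRv]. destruct (Rep_nn hR) as [hRw hRv].
    split; [apply Rplus_le_le_0_compat; [apply Rmult_le_pos|]; auto|split; [|split]].
    + eapply Rep_ext; [apply (Rep_add (Rep_scale Hc hR) HR)|unfold wsum; simpl; fold (wsum l); lra|].
      intro i; reflexivity.
    + intro i; unfold vsum; simpl; fold (vsum l i). rewrite Hv hv; lra.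
    + unfold wsum; simpl; fold (wsum l); intro Hpos.
      destruct (Rle_lt_or_eq_dec 0 c Hc) as [hc|hc].
      * destruct hs as [hs|[i hi]].
        -- left. assert (c * lam < c * 1) by (apply Rmult_lt_compat_l; auto). lra.
        -- right; exists i. specialize (HRv i). assert (0 < c * v i) by (apply Rmult_lt_0_compat; auto). lra.
      * subst c. destruct (Hs ltac:(lra)) as [hs'|[i hi]]; [left; lra|right; exists i; lra].
Qed.

Lemma vert_sub (U Y : iset m) (J : mi m) : Vert U J -> (forall y, Y y -> inNewton U y) -> Y J -> Vert Y J.
Proof.
  intros [HUJ HnJ] HYU HYJ; split; auto. intros [l [Hg [Hw Hv]]].
  destruct (sumJ Hg HYU) as [Lam [V [H0 [HR [HV Hs]]]]].
  change (wsum l = 1) in Hw. rewrite Hw in HR Hs.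
  destruct (Rep_nn HR) as [HRw HRv].
  destruct (Rlt_or_le Lam 1) as [hl|hl].
  - apply HnJ. apply inN_Rep.
    assert (Hpos : 0 <= / (1 - Lam)) by (apply Rlt_le, Rinv_0_lt_compat; lra).
    eapply Rep_ext; [apply (Rep_scale Hpos HR)|field; lra|].
    intro i; specialize (Hv i); change (INR (J i) = vsum l i) in Hv. rewrite HV in Hv.
    simpl. assert (V i = (1 - Lam) * INR (J i)) by lra. rewrite H. field; lra.
  - destruct (Hs ltac:(lra)) as [h|[i hi]]; [lra|].
    specialize (Hv i); change (INR (J i) = vsum l i) in Hv. rewrite HV in Hv.
    assert (Lam = 1) by lra. subst Lam. lra.
Qed.

Lemma midpoint (X : iset m) (J Q1 Q2 : mi m) : Vert X J -> X Q1 -> X Q2 ->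
  (forall i, (Q1 i + Q2 i)%N = (J i + J i)%N) -> Q1 = J.
Proof.
  intros [HJ Hn] H1 H2 Hs. apply NNPP; intro Hne.
  assert (Hne2 : Q2 <> J).
  { intro e; subst Q2; apply Hne; apply/ffunP => i. specialize (Hs i). apply/eqP.
    rewrite -(eqn_add2r (J i)) Hs. done. }
  apply Hn. exists ((/2, Q1) :: (/2, Q2) :: nil). split; [|split].
  - constructor; [split; [simpl; lra|exists Q1; split; [split; auto|intro; apply leqnn]]|].
    constructor; [split; [simpl; lra|exists Q2; split; [split; auto|intro; apply leqnn]]|constructor].
  - simpl; lra.
  - intro i; simpl. specialize (Hs i). apply (f_equal INR) in Hs. rewrite !plus_INR in Hs. lra.
Qed.

Lemma miaddC (x y : mi m) : miadd x y = miadd y x.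
Proof. apply/ffunP => i; rewrite !ffunE; apply addnC. Qed.

Lemma inN_translate (Y : iset m) (b y : mi m) : inNewton Y y ->
  inNewton (fun z => exists y', Y y' /\ z = miadd b y') (miadd b y).
Proof.
  intros [l [Hg [Hw Hv]]]. exists (shiftl 1 b l); split; [|split].
  - clear Hw Hv. induction Hg as [|[c p] l [Hc [y' [Hy Hle]]] Hl IH]; simpl; constructor; auto.
    split; auto. exists (miadd b y'); split; [exists y'; auto|].
    intro i; simpl; rewrite !ffunE mul1n addnC leq_add2r; auto.
  - change (wsum (shiftl 1 b l) = 1). rewrite wsum_shiftl; auto.
  - intro i; change (INR (miadd b y i) = vsum (shiftl 1 b l) i). rewrite vsum_shiftl.
    change (wsum l = 1) in Hw. rewrite Hw ffunE plus_INR. specialize (Hv i). change (INR (y i) = vsum l i) in Hv.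
    simpl; lra.
Qed.

Lemma inN_minkowski (X Y : iset m) (x y : mi m) : inNewton X x -> inNewton Y y ->
  inNewton (minkowski X Y) (miadd x y).
Proof.
  intros Hx Hy. rewrite miaddC.
  apply (inN_trans (inN_translate y Hx)).
  intros z [x' [Hx' ->]]. rewrite miaddC.
  eapply inN_mono; [|apply (inN_translate x' Hy)].
  intros z [y' [Hy' ->]]. exists x', y'; auto.
Qed.

Lemma dickson_gen k : forall (s : seq 'I_m), (size s <= k)%N -> forall X : iset m,
  (forall x y, X x -> X y -> forall i, i \notin s -> x i = y i) ->
  exists F : seq (mi m), (forall f, f \in F -> X f) /\
    forall x, X x -> exists2 f, f \in F & forall i, (f i <= x i)%N.
Proof.
  induction k as [|k IH]; intros s Hs X HX.
  - destruct (classic (exists x0, X x0)) as [[x0 H0]|Hn].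
    + exists [:: x0]; split.
      * intros f; rewrite inE => /eqP ->; auto.
      * intros x Hx; exists x0; [apply mem_head|]. intro i.
        destruct s; [|done]. rewrite (HX x0 x H0 Hx i); auto.
    + exists [::]; split; [done|]. intros x Hx; exfalso; apply Hn; eauto.
  - destruct (classic (exists x0, X x0)) as [[x0 H0]|Hn]; last first.
    { exists [::]; split; [done|]. intros x Hx; exfalso; apply Hn; eauto. }
    set L := [seq (i, c) | i <- s, c <- iota 0 (x0 i)].
    assert (HL : forall L' : seq ('I_m * nat), {subset L' <= L} -> exists F : seq (mi m),
      (forall f, f \in F -> X f) /\ forall x, X x -> (exists2 p, p \in L' & x p.1 = p.2) ->
        exists2 f, f \in F & forall i, (f i <= x i)%N).
    { induction L' as [|p L' IHL] => HsubL.
      - exists [::]; split; [done|]. intros x _ [p Hp _]; done.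
      - destruct IHL as [F1 [HF1 HF1']]; [intros q Hq; apply HsubL; rewrite inE Hq orbT; done|].
        have Hp : p \in L by apply HsubL; apply mem_head.
        case/allpairsPdep: Hp => i [c [Hi Hc Hpe]].
        destruct (IH (filter (predC1 i) s)) with (X := fun y => X y /\ y i = c) as [F2 [HF2 HF2']].
        + have : (size (filter (predC1 i) s) < size s)%N.
          { rewrite size_filter -(count_predC (predC1 i) s) -addn1 leq_add2l.
            rewrite (@eq_count _ _ (pred1 i)); last by move=> z; rewrite /= negbK.
            rewrite lt0n -lt0n -has_count has_pred1; done. }
          move=> h; rewrite -ltnS; exact: leq_trans h Hs.
        + intros x y [Hx Hxc] [Hy Hyc] j Hj. destruct (eqVneq j i) as [->|hji]; [by rewrite Hxc Hyc|].
          apply HX; auto. apply/negP => Hjs; move/negP: Hj; apply; rewrite mem_filter /= hji; done.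
        + exists (F1 ++ F2); split.
          * intros f; rewrite mem_cat => /orP [h|h]; [apply HF1; auto| apply HF2; auto].
          * intros x Hx [q Hq Hxq]. move: Hq; rewrite inE => /orP [/eqP Hq|Hq].
            -- subst q p. destruct (HF2' x) as [f Hf Hfx]; [split; auto|].
               exists f; [rewrite mem_cat Hf orbT; done|auto].
            -- destruct (HF1' x Hx) as [f Hf Hfx]; [exists q; auto|].
               exists f; [rewrite mem_cat Hf; done|auto]. }
    destruct (HL L (fun q h => h)) as [F [HF HF']].
    exists (x0 :: F); split.
    + intros f; rewrite inE => /orP [/eqP ->|h]; auto.
    + intros x Hx. destruct (classic (forall i, (x0 i <= x i)%N)) as [Hd|Hd].
      * exists x0; [apply mem_head|auto].
      * assert (exists i, (x i < x0 i)%N) as [i Hi].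
        { apply NNPP; intro h; apply Hd; intro i. rewrite leqNgt; apply/negP => h'; apply h; eauto. }
        destruct (HF' x Hx) as [f Hf Hfx].
        -- exists (i, x i); [|done]. apply (@allpairs_f_dep _ (fun _ => Datatypes_nat__canonical__eqtype_Equality) _ (fun (i : 'I_m) (c : nat) => (i, c))).
           ++ case Hin: (i \in s) => //. have := HX x0 x H0 Hx i; rewrite Hin => /(_ isT) h.
              by rewrite h ltnn in Hi.
           ++ rewrite mem_iota /=; done.
        -- exists f; [rewrite inE Hf orbT; done|auto].
Qed.

Lemma dickson (X : iset m) : exists F : seq (mi m), (forall f, f \in F -> X f) /\
    forall x, X x -> exists2 f, f \in F & forall i, (f i <= x i)%N.
Proof.
  apply (@dickson_gen (size (enum 'I_m)) (enum 'I_m) (leqnn _)).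
  intros x y _ _ i; rewrite mem_enum; done.
Qed.

Lemma prune k : forall F : seq (mi m), (size F <= k)%N -> forall f, f \in F ->
  inNewton (Vert (fun y => y \in F)) f.
Proof.
  induction k as [|k IH]; intros F HF.
  - destruct F; [done|done].
  - destruct (classic (forall f, f \in F -> Vert (fun y => y \in F) f)) as [Hall|Hn].
    + intros f Hf; apply inN_self; auto.
    + assert (exists f0, f0 \in F /\ inNewton (setD1 (fun y => y \in F) f0) f0) as [f0 [Hf0 Hin]].
      { apply NNPP; intro h; apply Hn; intros f Hf; split; auto. intro h'; apply h; eauto. }
      set F2 := filter (predC1 f0) F.
      have HF2 : (size F2 <= k)%N.
      { have : (size F2 < size F)%N.
        { rewrite /F2 size_filter -(count_predC (predC1 f0) F) -addn1 leq_add2l.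
          rewrite (@eq_count _ _ (pred1 f0)); last by move=> z; rewrite /= negbK.
          rewrite -has_count has_pred1; done. }
        move=> h; rewrite -ltnS; apply/leq_trans; [exact h|exact HF]. }
      have IH2 := IH F2 HF2.
      have Hin2 : inNewton (fun y => y \in F2) f0.
      { eapply inN_mono; [|exact Hin]. intros y [Hy Hyn]; rewrite mem_filter /= Hy andbT; apply/eqP; auto. }
      have HV : forall v, Vert (fun y => y \in F2) v -> Vert (fun y => y \in F) v.
      { intros v Hv. apply (vert_sub Hv).
        - intros y Hy. destruct (eqVneq y f0) as [->|hne]; auto.
          apply inN_self; rewrite mem_filter /= hne; done.
        - destruct Hv as [Hv _]; move: Hv; rewrite mem_filter => /andP [_ h]; done. }
      have HF2V : forall y, y \in F2 -> inNewton (Vert (fun y => y \in F)) y.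
      { intros y Hy; eapply inN_mono; [exact HV|apply IH2; auto]. }
      intros f Hf. destruct (eqVneq f f0) as [->|hne].
      * apply (inN_trans Hin2); auto.
      * apply HF2V; rewrite mem_filter /= hne; done.
Qed.

Lemma inN_vert (X : iset m) (x : mi m) : X x -> inNewton (Vert X) x.
Proof.
  intro Hx. destruct (dickson X) as [F [HF HF']].
  destruct (HF' x Hx) as [f Hf Hfx].
  have H1 : inNewton (fun y => y \in F) x by apply (inN_dom Hf); auto.
  have H2 := inN_trans H1 (@prune (size F) F (leqnn _)).
  eapply inN_mono; [|exact H2].
  intros v Hv. apply (vert_sub Hv).
  - intros y Hy; destruct (HF' y Hy) as [g Hg Hgy]; apply (inN_dom Hg); auto.
  - destruct Hv as [Hv _]; apply HF; auto.
Qed.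

End Conv.


Ltac genff := repeat match goal with |- context [@fun_of_fin ?T ?F ?P ?f ?x] =>
  let a := fresh "a" in move: (@fun_of_fin T F P f x) => a end.
Ltac flia := genff; lia.

Section PSB.
Variables (K : fieldType) (m : nat).
Local Open Scope ring_scope.

Definition mile (I J : mi m) : bool := [forall i, (I i <= J i)%N].
Lemma mileP (I J : mi m) : reflect (forall i, (I i <= J i)%N) (mile I J).
Proof. exact: forallP. Qed.
Definition misub (J I : mi m) : mi m := [ffun i => (J i - I i)%N].
Definition tonat N (I : {ffun 'I_m -> 'I_N}) : mi m := [ffun i => nat_of_ord (I i)].
Definition bnd (J : mi m) := (\sum_(i < m) J i).+1.
Definition box (J : mi m) : seq (mi m) :=
  map (@tonat (bnd J)) (filter (fun II : {ffun 'I_m -> 'I_(bnd J)} => [forall i, (II i <= J i)%N])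
    (index_enum {ffun 'I_m -> 'I_(bnd J)})).

Lemma tonat_inj N : injective (@tonat N).
Proof.
  move=> I I' /ffunP h; apply/ffunP => i; apply/val_inj; move: (h i); rewrite !ffunE; done.
Qed.

Lemma le_bnd (J : mi m) i : (J i < bnd J)%N.
Proof. rewrite /bnd ltnS (bigD1 i) //=; apply leq_addr. Qed.

Lemma mem_box (J x : mi m) : (x \in box J) = mile x J.
Proof.
  apply/idP/idP.
  - case/mapP => I; rewrite mem_filter => /andP [/forallP h _] ->.
    apply/mileP => i; rewrite ffunE; exact: h.
  - move/mileP => h. apply/mapP.
    exists [ffun i => (inord (x i) : 'I_(bnd J))].
    + rewrite mem_filter mem_index_enum andbT; apply/forallP => i; rewrite ffunE inordK //.
      exact: leq_ltn_trans (h i) (le_bnd J i).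
    + apply/ffunP => i; rewrite !ffunE inordK //; exact: leq_ltn_trans (h i) (le_bnd J i).
Qed.

Lemma box_uniq (J : mi m) : uniq (box J).
Proof.
  rewrite /box map_inj_uniq; last exact: tonat_inj.
  apply: filter_uniq; apply: index_enum_uniq.
Qed.

Lemma psmul_box (f g : ps K m) J : psmul f g J = \sum_(I <- box J) f I * g (misub J I).
Proof.
  rewrite /psmul /box big_map big_filter. apply: eq_bigr => I _.
  congr (_ * g _); apply/ffunP => i; rewrite !ffunE; done.
Qed.

Lemma psmul_any (f g : ps K m) J (s : seq (mi m)) : uniq s -> (forall x, (x \in s) = mile x J) ->
  psmul f g J = \sum_(I <- s) f I * g (misub J I).
Proof.
  move=> us hs; rewrite psmul_box; apply: perm_big; apply: uniq_perm => //.
  - exact: box_uniq.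
  - by move=> x; rewrite mem_box hs.
Qed.

Lemma misubK (J I : mi m) : mile I J -> misub J (misub J I) = I.
Proof. move/mileP => h; apply/ffunP => i; rewrite !ffunE; have := h i; flia. Qed.

Lemma misub_le (J I : mi m) : mile (misub J I) J.
Proof. apply/mileP => i; rewrite ffunE; flia. Qed.

Lemma psmulC (f g : ps K m) J : psmul f g J = psmul g f J.
Proof.
  rewrite (psmul_box g f) (@psmul_any f g J (map (misub J) (box J))).
  - rewrite big_map; apply: eq_big_seq => I; rewrite mem_box => hI.
    by rewrite misubK // mulrC.
  - rewrite map_inj_in_uniq ?box_uniq // => I I'; rewrite !mem_box => h1 h2 e.
    by rewrite -(misubK h1) e misubK.
  - move=> x; apply/mapP/idP.
    + by case=> I _ ->; apply misub_le.
    + move=> hx; exists (misub J x); [by rewrite mem_box misub_le| by rewrite misubK].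
Qed.

Lemma psmul_single (f g : ps K m) J I0 : mile I0 J ->
  (forall I, mile I J -> I != I0 -> f I * g (misub J I) = 0) ->
  psmul f g J = f I0 * g (misub J I0).
Proof.
  move=> h0 h; rewrite psmul_box (bigD1_seq I0) ?box_uniq ?mem_box //=.
  rewrite big1_seq ?addr0 // => I /andP [hne]; rewrite mem_box => hI; exact: h.
Qed.

Lemma psmul_supp (f g : ps K m) J : psmul f g J != 0 ->
  exists I, [/\ mile I J, f I != 0 & g (misub J I) != 0].
Proof.
  move=> h; apply: NNPP => hn; move/eqP: h; apply.
  rewrite psmul_box big1_seq // => I; rewrite mem_box => hI.
  case: (eqVneq (f I) 0) => [->|hf]; first by rewrite mul0r.
  case: (eqVneq (g (misub J I)) 0) => [->|hg]; first by rewrite mulr0.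
  by exfalso; apply: hn; exists I.
Qed.

Definition mi0' : mi m := [ffun _ => 0%N].

Lemma psmul1 (f : ps K m) J : psmul (@ps1 K m) f J = f J.
Proof.
  rewrite (@psmul_single _ _ _ mi0).
  - rewrite /ps1 eqxx mul1r; congr f; apply/ffunP => i; rewrite !ffunE; flia.
  - apply/mileP => i; rewrite ffunE; done.
  - by move=> I _ hI; rewrite /ps1 (negbTE hI) mul0r.
Qed.

Definition miplus (I K' : mi m) : mi m := [ffun i => (I i + K' i)%N].

Lemma psmulA (f g h : ps K m) J : psmul f (psmul g h) J = psmul (psmul f g) h J.
Proof.
  rewrite psmul_box.
  transitivity (\sum_(p <- [seq (a, b) | a <- box J, b <- box (misub J a)])
     (f p.1 * g p.2 * h (misub (misub J p.1) p.2))).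
  { rewrite big_allpairs_dep /=; apply: eq_bigr => I _.
    rewrite psmul_box mulr_sumr; apply: eq_bigr => K' _; by rewrite mulrA. }
  rewrite psmul_box.
  transitivity (\sum_(p <- [seq (a, b) | a <- box J, b <- box a])
     (f p.2 * g (misub p.1 p.2) * h (misub J p.1))); last first.
  { rewrite big_allpairs_dep /=; apply: eq_bigr => L _.
    rewrite psmul_box mulr_suml; apply: eq_bigr => I _; done. }
  set A := [seq (a, b) | a <- box J, b <- box (misub J a)].
  set B := [seq (a, b) | a <- box J, b <- box a].
  set phi := fun p : mi m * mi m => (p.2, misub p.1 p.2).
  have HB : forall p, p \in B -> mile p.2 p.1 && mile p.1 J.
  { move=> p /allpairsPdep [L [I [hL hI ->]]]; rewrite !mem_box in hL hI; by rewrite /= hL hI. }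
  transitivity (\sum_(p <- map phi B) (f p.1 * g p.2 * h (misub (misub J p.1) p.2))).
  { apply: perm_big; apply: uniq_perm.
    - apply: allpairs_uniq_dep; [exact: box_uniq| move=> I _; exact: box_uniq| by move=> [a b] [c d] _ _ [-> ->]].
    - rewrite map_inj_in_uniq.
      + apply: allpairs_uniq_dep; [exact: box_uniq| move=> I _; exact: box_uniq| by move=> [a b] [c d] _ _ [-> ->]].
      + move=> [L I] [L' I'] h1 h2 [e1 e2]. move: (HB _ h1) (HB _ h2) => /= /andP [a1 _] /andP [a2 _].
        subst I'. congr pair. apply/ffunP => i; move/ffunP: e2 => /(_ i); rewrite !ffunE.
        move/mileP: a1 => /(_ i); move/mileP: a2 => /(_ i); flia.
    - move=> [I K']; apply/idP/idP.
      + case/allpairsPdep => I1 [K1 [h1 h2 [-> ->]]]; rewrite !mem_box in h1 h2.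
        apply/mapP; exists (miplus I1 K1, I1).
        * apply/allpairsPdep; exists (miplus I1 K1), I1; split => //; rewrite mem_box;
          apply/mileP => i; rewrite ffunE; move/mileP: h1 => /(_ i); move/mileP: h2 => /(_ i); rewrite ffunE; flia.
        * rewrite /phi /=; congr pair; apply/ffunP => i; rewrite !ffunE; flia.
      + case/mapP => [[L I1]] hp [-> ->]. move: (HB _ hp) => /= /andP [a1 a2].
        apply/allpairsPdep; exists I1, (misub L I1); split => //; rewrite mem_box.
        * apply/mileP => i; move/mileP: a1 => /(_ i); move/mileP: a2 => /(_ i); flia.
        * apply/mileP => i; rewrite !ffunE; move/mileP: a1 => /(_ i); move/mileP: a2 => /(_ i); flia. }
  rewrite big_map; apply: eq_big_seq => [[L I]] hp; move: (HB _ hp) => /= /andP [a1 a2].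
  congr (_ * h _); apply/ffunP => i; rewrite !ffunE; move/mileP: a1 => /(_ i); move/mileP: a2 => /(_ i); flia.
Qed.

Lemma psmulC' (f g : ps K m) : psmul f g = psmul g f.
Proof. apply: functional_extensionality => J; apply psmulC. Qed.
Lemma psmulA' (f g h : ps K m) : psmul f (psmul g h) = psmul (psmul f g) h.
Proof. apply: functional_extensionality => J; apply psmulA. Qed.
Lemma psmulCA (f g h : ps K m) : psmul f (psmul g h) = psmul g (psmul f h).
Proof. by rewrite psmulA' (psmulC' f g) -psmulA'. Qed.


Section Eval.
Variable n : nat.
Implicit Types (phi : 'I_n -> ps K m) (M : dmonom m n).

Lemma dmeval_rem phi M v : v \in M ->
  dmeval phi M = psmul (psTheta v.2 (phi v.1)) (dmeval phi (rem v M)).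
Proof.
  elim: M => [|w M IH] //=; rewrite inE => /orP [/eqP ->|hv].
  - by rewrite eqxx.
  - case: (eqVneq w v) => [->|hwv] /=; first done.
    by rewrite (IH hv) psmulCA.
Qed.

Lemma dmeval_perm phi M M' : perm_eq M M' -> dmeval phi M = dmeval phi M'.
Proof.
  elim: M M' => [|v M IH] M' hp.
  - by move: (perm_size hp) => /= /esym/size0nil ->.
  - have hv : v \in M' by rewrite -(perm_mem hp) mem_head.
    rewrite (dmeval_rem phi hv) /=; congr psmul; apply: IH.
    have h2 := perm_to_rem hv. rewrite -(perm_cons v). exact: perm_trans hp h2.
Qed.

Lemma dpeval_sum (P : dpoly K m n) phi J :
  dpeval P phi J = \sum_(c <- P) psmul c.1 (dmeval phi c.2) J.
Proof. elim: P => [|c P IH]; first by rewrite big_nil. by rewrite big_cons -IH. Qed.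

Lemma psmul_dcoef (P : dpoly K m n) M (g : ps K m) J :
  psmul (dcoef P M) g J = \sum_(c <- P | perm_eq c.2 M) psmul c.1 g J.
Proof.
  rewrite psmul_box; under eq_bigr => I _ do rewrite /dcoef mulr_suml.
  rewrite exchange_big /=; apply: eq_bigr => c _; by rewrite psmul_box.
Qed.
End Eval.

Section Theta.
Hypothesis charK : [pchar K] =i pred0.

Lemma natS_neq0 k : (k.+1%:R : K) != 0.
Proof. by rewrite (pcharf0P _).1 // . Qed.

Lemma iter_psder k N (g : ps K m) (I : mi m) : exists c : K, c != 0 /\
  iter N (psder k) g I = c * g [ffun i => (I i + (i == k) * N)%N].
Proof.
  elim: N g I => [|N IH] g I.
  - exists 1; split; first exact: oner_neq0. rewrite mul1r /=; congr g; apply/ffunP => i; rewrite ffunE; flia.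
  - rewrite iterSr. have [c [hc ->]] := IH (psder k g) I.
    rewrite /psder. exists (c * ((([ffun i => (I i + (i == k) * N)%N] : mi m) k).+1%:R)); split.
    + by rewrite mulf_neq0 // natS_neq0.
    + rewrite -mulrA; congr (_ * (_ * g _)). apply/ffunP => i; rewrite !ffunE; case: (i == k); flia.
Qed.

Lemma psTheta_formula (J : mi m) (f : ps K m) (I : mi m) : exists c : K, c != 0 /\
  psTheta J f I = c * f (miadd I J).
Proof.
  rewrite /psTheta.
  have gen : forall s : seq 'I_m, uniq s -> forall I : mi m, exists c : K, c != 0 /\
    foldr (fun k g => iter (J k) (psder k) g) f s I =
    c * f [ffun i => (I i + (if i \in s then J i else 0))%N].
  { elim => [|k s IH] /=.
    - move=> _ I0; exists 1; split; first exact: oner_neq0. rewrite mul1r; congr f; apply/ffunP => i; rewrite ffunE; flia.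
    - move=> /andP [hk us] I0. have [c1 [hc1 ->]] := iter_psder k (J k) (foldr (fun k g => iter (J k) (psder k) g) f s) I0.
      have [c2 [hc2 ->]] := IH us [ffun i => (I0 i + (i == k) * J k)%N].
      exists (c1 * c2); split; first by rewrite mulf_neq0.
      rewrite mulrA; congr (_ * f _); apply/ffunP => i; rewrite !ffunE inE.
      case: (eqVneq i k) => [->|hik] /=.
      + rewrite (negbTE hk) /=; flia.
      + case: (i \in s); flia. }
  have [c [hc ->]] := gen (enum 'I_m) (enum_uniq _) I.
  exists c; split => //; congr (_ * f _); apply/ffunP => i; rewrite !ffunE mem_enum; done.
Qed.
End Theta.

End PSB.


Section Main.
Variables (K : fieldType) (m n : nat).
Local Open Scope ring_scope.
Hypothesis charK : [pchar K] =i pred0.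
Variable phi : 'I_n -> ps K m.
Local Open Scope ring_scope.

Definition Sf : 'I_n -> iset m := fun i => Supp (phi i).
Definition Sig (M : dmonom m n) : iset m :=
  foldr (fun v A => minkowski (ThetaTrop v.2 (Sf v.1)) A) (fun J => J = mi0) M.

Lemma theta_supp1 (Kk : mi m) i b : psTheta Kk (phi i) b != 0 -> ThetaTrop Kk (Sf i) b.
Proof.
  have [c [hc ->]] := psTheta_formula charK Kk (phi i) b.
  move=> h. exists (miadd b Kk); split; [|split].
  - rewrite /Sf /Supp => e; move: h; rewrite e mulr0 eqxx; done.
  - move=> j; rewrite ffunE; apply leq_addl.
  - apply/ffunP => j; rewrite !ffunE; flia.
Qed.

Lemma theta_supp2 (Kk : mi m) i b : ThetaTrop Kk (Sf i) b -> psTheta Kk (phi i) b != 0.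
Proof.
  move=> [s [hs [hle ->]]].
  have [c [hc ->]] := psTheta_formula charK Kk (phi i) [ffun j => (s j - Kk j)%N].
  rewrite mulf_neq0 //. have -> : miadd [ffun j => (s j - Kk j)%N] Kk = s.
  { apply/ffunP => j; rewrite !ffunE; have := hle j; flia. }
  by apply/eqP.
Qed.

Lemma dmeval_supp M B : dmeval phi M B != 0 -> Sig M B.
Proof.
  elim: M B => [|v M IH] B /=.
  - rewrite /ps1; case: (eqVneq B mi0) => [->|h] //; by rewrite eqxx.
  - case/psmul_supp => I [hI h1 h2]. exists I, (misub B I); split; [|split].
    + exact: theta_supp1.
    + exact: IH.
    + apply/ffunP => j; rewrite !ffunE; move/mileP: hI => /(_ j); flia.
Qed.

Lemma miadd_inj (b x y : mi m) : miadd b x = miadd b y -> x = y.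
Proof. move/ffunP => h; apply/ffunP => j; move: (h j); rewrite !ffunE; flia. Qed.

Lemma dmeval_vert M B : Vert (Sig M) B -> dmeval phi M B != 0.
Proof.
  elim: M B => [|v M IH] B.
  - move=> [hB _]; rewrite /= /ps1; move: hB => /= ->; rewrite eqxx; exact: oner_neq0.
  - move=> hV; have [[b [B1 [hb [hB1 eB]]]] hn] := hV; subst B.
    have hV1 : Vert (Sig M) B1.
    { split => //. move=> hin; apply: hn.
      eapply inN_mono; [|exact: (inN_translate b hin)].
      move=> z [y' [[hy' hne] ->]]; split.
      - by exists b, y'.
      - move=> e; apply: hne; exact: miadd_inj e. }
    rewrite /= (@psmul_single _ _ _ _ _ b).
    + have -> : misub (miadd b B1) b = B1 by apply/ffunP => j; rewrite !ffunE; flia.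
      rewrite mulf_neq0 //; [exact: theta_supp2|exact: IH].
    + apply/mileP => j; rewrite ffunE; flia.
    + move=> I hI hIb.
      case: (eqVneq (psTheta v.2 (phi v.1) I) 0) => [->|h1]; first by rewrite mul0r.
      case: (eqVneq (dmeval phi M (misub (miadd b B1) I)) 0) => [->|h2]; first by rewrite mulr0.
      exfalso; move/eqP: hIb; apply.
      have := @midpoint _ (Sig (v :: M)) (miadd b B1) (miadd I B1) (miadd b (misub (miadd b B1) I)) hV.
      move=> /(_ _ _ _) e. apply: (@miadd_inj B1). rewrite (miaddC B1 I) (miaddC B1 b). apply: e.
      * exists I, B1; split; [exact: theta_supp1|split; [exact hB1|reflexivity]].
      * exists b, (misub (miadd b B1) I); split; [exact hb|split; [exact: dmeval_supp h2|reflexivity]].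
      * move=> j; rewrite !ffunE; move/mileP: hI => /(_ j); rewrite ffunE; flia.
Qed.


Section Poly.
Variable P : dpoly K m n.
Definition Uset : iset m := fun J => exists M, nzps (dcoef P M) /\ tterm P Sf M J.

Lemma tterm_inN M (a s : mi m) : Supp (dcoef P M) a -> Sig M s ->
  inNewton (tterm P Sf M) (miadd a s).
Proof. move=> ha hs; apply: inN_minkowski; apply: inN_vert; done. Qed.

Lemma tterm_vert M J : Vert Uset J -> nzps (dcoef P M) -> tterm P Sf M J -> Vert (tterm P Sf M) J.
Proof.
  move=> hV hnz ht; apply: (@vert_sub m Uset (tterm P Sf M) J hV) => // y hy; apply: inN_self; by exists M.
Qed.

Lemma C4 M0 J : Vert Uset J -> nzps (dcoef P M0) -> tterm P Sf M0 J ->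
  psmul (dcoef P M0) (dmeval phi M0) J != 0.
Proof.
  move=> hV hnz ht. have [A [B [[hA _] [hB eJ]]]] := ht; subst J.
  set X0 : iset m := minkowski (Supp (dcoef P M0)) (Sig M0).
  have hX0 : Vert X0 (miadd A B).
  { apply: (@vert_sub m Uset X0 (miadd A B) hV).
    - move=> y [a [s [ha [hs ->]]]]. eapply inN_mono; [|exact: tterm_inN ha hs].
      move=> z hz; by exists M0.
    - exists A, B; split => //; split => //; case: hB. done. }
  rewrite (@psmul_single _ _ _ _ _ A).
  - have -> : misub (miadd A B) A = B by apply/ffunP => j; rewrite !ffunE; flia.
    rewrite mulf_neq0 //; [by apply/eqP|by apply: dmeval_vert].
  - apply/mileP => j; rewrite ffunE; flia.
  - move=> I hI hIA.
    case: (eqVneq (dcoef P M0 I) 0) => [->|h1]; first by rewrite mul0r.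
    case: (eqVneq (dmeval phi M0 (misub (miadd A B) I)) 0) => [->|h2]; first by rewrite mulr0.
    exfalso; move/eqP: hIA; apply.
    have := @midpoint _ X0 (miadd A B) (miadd I B) (miadd A (misub (miadd A B) I)) hX0.
    move=> /(_ _ _ _) e. apply: (@miadd_inj B). rewrite (miaddC B I) (miaddC B A). apply: e.
    + exists I, B; split; [by apply/eqP|split; [by case: hB|reflexivity]].
    + exists A, (misub (miadd A B) I); split; [exact hA|split; [exact: dmeval_supp h2|reflexivity]].
    + move=> j; rewrite !ffunE; move/mileP: hI => /(_ j); rewrite ffunE; flia.
Qed.

Lemma C5 M1 J : Vert Uset J -> psmul (dcoef P M1) (dmeval phi M1) J != 0 ->
  nzps (dcoef P M1) /\ Vert (tterm P Sf M1) J.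
Proof.
  move=> hV; case/psmul_supp => I [hI h1 h2].
  have hnz : nzps (dcoef P M1) by exists I; apply/eqP.
  split => //.
  have hin : inNewton (tterm P Sf M1) J.
  { have -> : J = miadd I (misub J I).
    { apply/ffunP => j; rewrite !ffunE; move/mileP: hI => /(_ j); flia. }
    apply: tterm_inN; [by apply/eqP|exact: dmeval_supp h2]. }
  have ht : tterm P Sf M1 J.
  { apply: NNPP => hn. case: hV => _; apply. eapply inN_mono; [|exact hin].
    move=> z hz; split; [by exists M1|by move=> e; subst z]. }
  exact: tterm_vert.
Qed.

Lemma grp M0 J k : forall Q : dpoly K m n, (size Q < k)%N ->
  (forall M, ~~ perm_eq M M0 -> \sum_(c <- Q | perm_eq c.2 M) psmul c.1 (dmeval phi M) J = 0) ->
  \sum_(c <- Q | ~~ perm_eq c.2 M0) psmul c.1 (dmeval phi c.2) J = 0.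
Proof.
  elim: k => [|k IH] Q hQ hyp; first done.
  case: Q hQ hyp => [|c0 Q'] hQ hyp; first by rewrite big_nil.
  case: (boolP (perm_eq c0.2 M0)) => hc0.
  { rewrite big_cons hc0 /=. apply: IH => // M hM.
    move: (hyp M hM); rewrite big_cons.
    have -> : perm_eq c0.2 M = false.
    { apply/negP => h; move/negP: hM; apply. by apply: perm_trans hc0; rewrite perm_sym. }
    done. }
  rewrite (bigID (fun c : ps K m * dmonom m n => perm_eq c.2 c0.2)) /=.
  have -> : \sum_(i <- c0 :: Q' | ~~ perm_eq i.2 M0 && perm_eq i.2 c0.2) psmul i.1 (dmeval phi i.2) J =
            \sum_(i <- c0 :: Q' | perm_eq i.2 c0.2) psmul i.1 (dmeval phi c0.2) J.
  { apply: eq_big => c.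
    - case: (boolP (perm_eq c.2 c0.2)) => h; rewrite ?andbT ?andbF //.
      apply/negP => h'; move/negP: hc0; apply. by apply: perm_trans h'; rewrite perm_sym.
    - by move=> /andP [_ h]; rewrite (dmeval_perm phi h). }
  rewrite hyp // add0r.
  rewrite (eq_bigl (fun c : ps K m * dmonom m n => ~~ perm_eq c.2 c0.2 && ~~ perm_eq c.2 M0)); last by move=> c; rewrite andbC.
  rewrite -big_filter_cond. apply: IH.
  - rewrite /= perm_refl /= size_filter. apply: leq_ltn_trans (count_size _ _) _. done.
  - move=> M hM. rewrite big_filter_cond.
    case: (boolP (perm_eq M c0.2)) => hMc.
    + rewrite big_pred0 // => c. case: (boolP (perm_eq c.2 M)) => h; rewrite ?andbF ?andbT //.
      by rewrite (perm_trans h hMc).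
    + rewrite -[RHS](hyp M hM). apply: eq_bigl => c. case: (boolP (perm_eq c.2 M)) => h; rewrite ?andbF ?andbT //.
      apply/negP => h'; move/negP: hMc; apply. by apply: perm_trans h'; rewrite perm_sym.
Qed.

End Poly.
End Main.

Theorem main_aux (K : fieldType) (charK : [pchar K]%R =i pred0) (m n : nat)
  (phi : 'I_n -> ps K m) (P : dpoly K m n) (Hsol : forall J, dpeval P phi J = 0%R) :
  tropSol P (fun i => Supp (phi i)).
Proof.
  move=> J hJ. have hV : Vert (Uset phi P) J := hJ.
  case: (hV) => [[M0 [hnz ht]] _].
  have h0 := C4 charK hV hnz ht.
  have hs := Hsol J. rewrite dpeval_sum (bigID (fun c : ps K m * dmonom m n => perm_eq c.2 M0)) /= in hs.
  have e0 : (\sum_(c <- P | perm_eq c.2 M0) psmul c.1 (dmeval phi c.2) J =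
      psmul (dcoef P M0) (dmeval phi M0) J)%R.
  { by rewrite psmul_dcoef; apply: eq_bigr => c h; rewrite (dmeval_perm phi h). }
  rewrite e0 in hs.
  have [M1 [hM1 h1]] : exists M1, ~~ perm_eq M1 M0 /\ (psmul (dcoef P M1) (dmeval phi M1) J != 0)%R.
  { apply: NNPP => hn. move/eqP: h0; apply.
    have hg := @grp K m n phi M0 J (size P).+1 P (ltnSn _).
    rewrite hg ?GRing.addr0 in hs => //.
    move=> M hM; rewrite -psmul_dcoef. apply/eqP; apply: NNPP => h; apply: hn; exists M; split => //.
    exact/negP. }
  have [hnz1 hV1] := C5 charK hV h1.
  exists M0, M1; split; [by rewrite perm_sym|split; [done|split; [done|split; [|done]]]].
  exact: tterm_vert hV hnz ht.
Qed.


Theorem mainTheorem10 (K : closedFieldType) (charK : [pchar K]%R =i pred0)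
  (m n : nat) (hm : (0 < m)%N) (hn : (0 < n)%N)
  (G : dpoly K m n -> Prop) (HG : is_diff_ideal G)
  (phi : 'I_n -> ps K m)
  (Hsol : forall P, G P -> forall J, dpeval P phi J = 0%R) :
  forall P, G P -> tropSol P (fun i => Supp (phi i)).
Proof.
  move=> P HP. apply: (@main_aux K charK m n phi P (Hsol P HP)).
Qed.
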